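(* Let $G=(V,E)$ be a finite graph (parallel edges and loops allowed) and $e\neq f$ edges of $G$. In every monomial appearing in $\mathcal{M}_{ef}(1)$, and in every monomial appearing in $\sum_{\beta,\gamma}\mathbf{x}^{\beta}\mathbf{x}^{\gamma}\sum_{\mathbf{m}\in B_{\beta,\gamma}}\mathbf{m}$ (sum over ordered pairs of disjoint subsets $\beta,\gamma$ of $E\setminus\{e,f\}$), each variable $x_g$ has degree at most two.
   Context: Let $\{x_g : g\in E\}$ be variables. For $F\subseteq E$ write $\mathbf{x}^F=\prod_{g\in F}x_g$ and $k(F)$ for the number of connected components of $(V,F)$. For $A,B\subseteq E$ set $\mathcal{T}_A^B=\sum_{F\subseteq E:\,A\subseteq F,\,F\cap B=\varnothing}\mathbf{x}^F q^{k(F)}$; $\mathcal{T}_e^f=\mathcal{T}_{\{e\}}^{\{f\}}$, $\mathcal{T}_f^e=\mathcal{T}_{\{f\}}^{\{e\}}$, $\mathcal{T}_{ef}=\mathcal{T}_{\{e,f\}}^{\varnothing}$, $\mathcal{T}^{ef}=\mathcal{T}_{\varnothing}^{\{e,f\}}$, and $\mathcal{M}_{ef}(q)=(\mathcal{T}_e^f\mathcal{T}_f^e-\mathcal{T}_{ef}\mathcal{T}^{ef})/(x_ex_f(1-q))$, a polynomial. Let $E^{ef}=E\setminus\{e,f\}$. A subset $F\subseteq E^{ef}$ is a paracel if $k(F+e)=k(F+f)=k(F)-1$ and $(V,F+e)$, $(V,F+f)$ have the same connected components; an edge of $E^{ef}\setminus F$ is a smoot for paracel $F$ if it joins the same two components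 of $(V,F)$ as $e$ and $f$. For disjoint $\beta,\gamma\subseteq E^{ef}$, $A_{\beta,\gamma}$ is the set of $\alpha\subseteq E^{ef}$ disjoint from $\beta,\gamma$ with $\gamma\cup\alpha$ a paracel and every edge of $\beta$ a smoot for $\gamma\cup\alpha$; $\alpha,\alpha'\in A_{\beta,\gamma}$ are twins if $\alpha\cap\alpha'\in A_{\beta,\gamma}$; $B_{\beta,\gamma}$ is the set of distinct monomials $\mathbf{x}^{\alpha}\mathbf{x}^{\alpha'}$ with $\alpha,\alpha'$ twins. *)

(* Defs.v *)
From HB Require Import structures.
From mathcomp Require Import all_boot all_order all_algebra.
From mathcomp Require Import mpoly.
Set Implicit Arguments. Unset Strict Implicit. Unset Printing Implicit Defensive.
Import Order.TTheory GRing.Theory Num.Theory.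
Local Open Scope ring_scope.

(* A finite multigraph (loops, parallel edges allowed): vertex set V (a finType),
   edge set E = 'I_m, and ends g = the two endpoints of edge g. *)

Section Graph.
Variables (V : finType) (m : nat) (ends : 'I_m -> V * V).

Definition adjF (F : {set 'I_m}) : rel V :=
  fun u v => [exists g in F, (ends g == (u, v)) || (ends g == (v, u))].

Definition kcomp (F : {set 'I_m}) : nat := n_comp (adjF F) predT.

Definition xmon (F : {set 'I_m}) : {mpoly int[m]} := \prod_(g in F) 'X_g.

(* T_A^B, a polynomial in q (= 'X) with coefficients in Z[x_g : g in E] *)
Definition Tpoly (A B : {set 'I_m}) : {poly {mpoly int[m]}} :=
  \sum_(F : {set 'I_m} | (A \subset F) && [disjoint F & B])
     (xmon F)%:P * 'X ^+ kcomp F.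

Variables (e f : 'I_m).

(* numerator  T_e^f T_f^e - T_ef T^ef  of M_ef(q) *)
Definition Mnum : {poly {mpoly int[m]}} :=
  Tpoly [set e] [set f] * Tpoly [set f] [set e]
  - Tpoly [set e; f] set0 * Tpoly set0 [set e; f].

Definition Eef : {set 'I_m} := ~: [set e; f].

Definition paracel (F : {set 'I_m}) : bool :=
  [&& F \subset Eef,
      (kcomp (e |: F)).+1 == kcomp F,
      (kcomp (f |: F)).+1 == kcomp F &
      [forall u, forall v,
         connect (adjF (e |: F)) u v == connect (adjF (f |: F)) u v]].

Definition joins_same (F : {set 'I_m}) (g : 'I_m) : bool :=
  let c := connect (adjF F) in
  ((c (ends g).1 (ends e).1 && c (ends g).2 (ends e).2)
   || (c (ends g).1 (ends e).2 && c (ends g).2 (ends e).1))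
  && ((c (ends g).1 (ends f).1 && c (ends g).2 (ends f).2)
   || (c (ends g).1 (ends f).2 && c (ends g).2 (ends f).1)).

Definition smoot (F : {set 'I_m}) (g : 'I_m) : bool :=
  [&& g \in Eef, g \notin F & joins_same F g].

Definition inA (beta gamma alpha : {set 'I_m}) : bool :=
  [&& alpha \subset Eef, [disjoint alpha & beta], [disjoint alpha & gamma],
      paracel (gamma :|: alpha) &
      [forall g in beta, smoot (gamma :|: alpha) g]].

Definition twins (beta gamma alpha alpha' : {set 'I_m}) : bool :=
  [&& inA beta gamma alpha, inA beta gamma alpha' &
      inA beta gamma (alpha :&: alpha')].

Definition Bset (beta gamma : {set 'I_m}) : seq {mpoly int[m]} :=
  undup [seq xmon aa.1 * xmon aa.2 |
          aa <- enum [set aa : {set 'I_m} * {set 'I_m} |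
                        twins beta gamma aa.1 aa.2]].

Definition Bsum : {mpoly int[m]} :=
  \sum_(bg : {set 'I_m} * {set 'I_m} |
          [&& bg.1 \subset Eef, bg.2 \subset Eef & [disjoint bg.1 & bg.2]])
     xmon bg.1 * xmon bg.2 * \sum_(mu <- Bset bg.1 bg.2) mu.

End Graph.

Definition deg_le2 (m : nat) (p : {mpoly int[m]}) : Prop :=
  forall mu : 'X_{1..m}, mu \in msupp p -> forall i : 'I_m, (mu i <= 2)%N.

(* Main.v *)
Require Import Defs.
From HB Require Import structures.
From mathcomp Require Import all_boot all_order all_algebra.
From mathcomp Require Import mpoly.
From mathcomp Require Import ring.
Import GRing.Theory.
Set Implicit Arguments. Unset Strict Implicit.
Local Open Scope ring_scope.


Definition good (m : nat) (p : {mpoly int[m]}) : Prop :=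
  forall mu : 'X_{1..m}, mu \in msupp p -> forall i : 'I_m, (mu i <= 2)%N.

Lemma good0 m : good (0%R : {mpoly int[m]}).
Proof. by move=> mu; rewrite msupp0. Qed.

Lemma goodD m (p q : {mpoly int[m]}) : good p -> good q -> good (p + q).
Proof.
move=> hp hq mu /msuppD_le; rewrite mem_cat => /orP[/hp|/hq] //.
Qed.

Lemma goodN m (p : {mpoly int[m]}) : good p -> good (- p).
Proof. by move=> hp mu; rewrite (perm_mem (msuppN _)) => /hp. Qed.

Lemma goodB m (p q : {mpoly int[m]}) : good p -> good q -> good (p - q).
Proof. by move=> hp hq; apply: goodD => //; apply: goodN. Qed.

Lemma good_sum m (I : Type) (r : seq I) (P : pred I) (F : I -> {mpoly int[m]}) :
  (forall i, P i -> good (F i)) -> good (\sum_(i <- r | P i) F i).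
Proof.
move=> h; elim/big_ind: _ => //; [exact: good0| exact: goodD].
Qed.

Lemma goodMn m (p : {mpoly int[m]}) n : good p -> good (p *+ n).
Proof.
move=> hp; elim: n => [|n ih]; first by rewrite mulr0n; apply: good0.
by rewrite mulrS; apply: goodD.
Qed.

Lemma goodMnat m (p : {mpoly int[m]}) n : good p -> good (p * n%:R).
Proof. by move=> hp; rewrite mulr_natr; apply: goodMn. Qed.

Definition mon m (F : {set 'I_m}) : 'X_{1..m} := (\sum_(g in F) U_(g))%MM.

Lemma xmonE m (F : {set 'I_m}) : xmon F = 'X_[mon F].
Proof. by rewrite /xmon /mon mprodXE. Qed.

Lemma monE m (F : {set 'I_m}) i : mon F i = (i \in F).
Proof.
rewrite /mon mnm_sumE.
case: (boolP (i \in F)) => iF.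
  rewrite (bigD1 i) //= mnm1E eqxx big1 // => g /andP[_ /negbTE].
  by rewrite mnm1E => ->.
rewrite big1 // => g gF; rewrite mnm1E; case: eqP => // eg.
by move: iF; rewrite -eg gF.
Qed.

Lemma good_xmon2 m (F G : {set 'I_m}) : good (xmon F * xmon G).
Proof.
rewrite !xmonE -mpolyXD => mu; rewrite msuppX inE => /eqP -> i.
by rewrite mnmDE !monE; case: (i \in F); case: (i \in G).
Qed.

Lemma good_xmon4 m (b c a a' : {set 'I_m}) :
  [disjoint b & c] -> [disjoint a & b] -> [disjoint a & c] ->
  [disjoint a' & b] -> [disjoint a' & c] ->
  good (xmon b * xmon c * (xmon a * xmon a')).
Proof.
move=> dbc dab dac da'b da'c.
rewrite !xmonE -!mpolyXD => mu; rewrite msuppX inE => /eqP -> i.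
rewrite !mnmDE !monE.
case: (boolP (i \in b)) => ib.
  by rewrite (disjointFr dbc ib) (disjointFl dab ib) (disjointFl da'b ib).
case: (boolP (i \in c)) => ic.
  by rewrite (disjointFl dac ic) (disjointFl da'c ic).
by case: (i \in a); case: (i \in a').
Qed.

Lemma xmon_neq0 m (F : {set 'I_m}) : xmon F != 0.
Proof. by rewrite xmonE -msupp_eq0 msuppX. Qed.


Lemma good_Bsum (V : finType) (m : nat) (ends : 'I_m -> V * V) (e f : 'I_m) :
  good (Bsum ends e f).
Proof.
rewrite /Bsum; apply: good_sum => -[b c] /= /and3P[_ _ dbc].
rewrite big_seq mulr_sumr; apply: good_sum => mu.
rewrite /Bset mem_undup => /mapP[[a a']]; rewrite mem_enum inE /= => /and3P[ha ha' _] ->.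
move: ha ha' => /and5P[_ dab dac _ _] /and5P[_ da'b da'c _ _].
exact: good_xmon4.
Qed.


Definition Tr (V : finType) (m : nat) (ends : 'I_m -> V * V) (A B : {set 'I_m}) :
  {poly {mpoly int[m]}} :=
  \sum_(F : {set 'I_m} | (A \subset F) && [disjoint F & B])
     (xmon (F :\: A))%:P * 'X ^+ kcomp ends F.

Lemma xmon_split m (A F : {set 'I_m}) : A \subset F -> xmon F = xmon A * xmon (F :\: A).
Proof. by move=> sAF; rewrite /xmon (big_setID A) /= (setIidPr sAF). Qed.

Lemma Tpoly_split (V : finType) (m : nat) (ends : 'I_m -> V * V) (A B : {set 'I_m}) :
  Tpoly ends A B = (xmon A)%:P * Tr ends A B.
Proof.
rewrite /Tpoly /Tr mulr_sumr; apply: eq_bigr => F /andP[sAF _].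
by rewrite (xmon_split sAF) polyCM mulrA.
Qed.

Lemma xmon_ef m (e f : 'I_m) : e != f -> xmon [set e; f] = xmon [set e] * xmon [set f].
Proof.
by move=> ef; rewrite /xmon big_setU1 /= ?inE // !big_set1.
Qed.

Lemma xmon0 m : xmon (set0 : {set 'I_m}) = 1.
Proof. by rewrite /xmon big_set0. Qed.

Definition Nn (V : finType) (m : nat) (ends : 'I_m -> V * V) (e f : 'I_m) :=
  Tr ends [set e] [set f] * Tr ends [set f] [set e]
  - Tr ends [set e; f] set0 * Tr ends set0 [set e; f].

Lemma ringaux (R : comRingType) (a b t1 t2 t3 t4 : R) :
  a*t1*(b*t2) - a*b*t3*(1*t4) = a*b*(t1*t2 - t3*t4).
Proof. by rewrite mul1r mulrBr mulrACA !mulrA. Qed.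

Lemma Mnum_split (V : finType) (m : nat) (ends : 'I_m -> V * V) (e f : 'I_m) :
  e != f -> Mnum ends e f = (xmon [set e] * xmon [set f])%:P * Nn ends e f.
Proof.
move=> ef; rewrite /Mnum /Nn !Tpoly_split (xmon_ef ef) xmon0 polyC1 !polyCM.
exact: ringaux.
Qed.

Lemma Tr_at1 (V : finType) (m : nat) (ends : 'I_m -> V * V) (e f : 'I_m) (A B : {set 'I_m}) :
  [disjoint A & B] -> A :|: B = [set e; f] ->
  (Tr ends A B).[1] = \sum_(F : {set 'I_m} | F \subset Eef e f) xmon F.
Proof.
move=> dAB UAB; rewrite /Tr horner_sum.
under eq_bigr do rewrite hornerCM hornerXn expr1n mulr1.
rewrite (reindex_onto (fun F => A :|: F) (fun F => F :\: A)); last first.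
  move=> F /andP[sAF _]; apply/setP => x; rewrite !inE.
  by case: (boolP (x \in A)) => xA //=; rewrite (subsetP sAF x xA).
apply: eq_big => F; last by move=> /andP[_ /eqP ->].
apply/idP/idP.
  move=> /andP[/andP[_ H1] /eqP H2]; apply/subsetP => x xF.
  have xnB : x \notin B by rewrite (disjointFr H1) // inE xF orbT.
  have xnA : x \notin A by move: xF; rewrite -{1}H2 inE => /andP[].
  by rewrite /Eef inE -UAB inE negb_or xnA.
move=> sF.
have xnAB : forall x, x \in F -> (x \notin A) && (x \notin B).
  by move=> x /(subsetP sF); rewrite /Eef inE -UAB inE negb_or.
rewrite subsetUl /=; apply/andP; split.
  rewrite disjoint_subset; apply/subsetP => x; rewrite !inE => /orP[xA|xF]; apply/negP => xB.
    by rewrite (disjointFr dAB xA) in xB.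
  by move: (xnAB x xF); rewrite xB andbF.
apply/eqP/setP => x; rewrite !inE.
case: (boolP (x \in A)) => xA //=.
by case: (boolP (x \in F)) => // /xnAB; rewrite xA.
Qed.


Lemma disj11 m (x y : 'I_m) : x != y -> [disjoint [set x] & [set y]].
Proof.
move=> xy; rewrite disjoint_subset; apply/subsetP => z; rewrite !inE => /eqP ->.
by [].
Qed.

Lemma disj0 m (A : {set 'I_m}) : [disjoint A & set0].
Proof. by rewrite disjoint_subset; apply/subsetP => z; rewrite !inE. Qed.

Lemma disj0l m (A : {set 'I_m}) : [disjoint set0 & A].
Proof. by rewrite disjoint_sym disj0. Qed.

Lemma horner_aux (R : comNzRingType) (t1 t2 t3 t4 : {poly R}) x :
  (t1*t2 - t3*t4).[x] = t1.[x]*t2.[x] - t3.[x]*t4.[x].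
Proof. by rewrite hornerD hornerN !hornerM. Qed.

Lemma sub_aux (R : comNzRingType) (a b c d r : R) :
  a = r -> b = r -> c = r -> d = r -> a*b - c*d = 0.
Proof. by move=> -> -> -> ->; rewrite subrr. Qed.

Lemma Nn_at1 (V : finType) (m : nat) (ends : 'I_m -> V * V) (e f : 'I_m) :
  e != f -> (Nn ends e f).[1] = 0.
Proof.
move=> ef; rewrite /Nn horner_aux.
apply: sub_aux.
- exact: (@Tr_at1 _ _ ends e f [set e] [set f] (disj11 ef)).
- apply: (@Tr_at1 _ _ ends e f [set f] [set e]); first by rewrite disj11 // eq_sym.
  by rewrite setUC.
- by apply: (@Tr_at1 _ _ ends e f [set e; f] set0); rewrite ?disj0 ?setU0.
- by apply: (@Tr_at1 _ _ ends e f set0 [set e; f]); rewrite ?disj0l ?set0U.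
Qed.
Lemma gen_sum (R : nzRingType) (G : R -> Prop) (G0 : G 0)
  (GD : forall a b, G a -> G b -> G (a + b)) (I : Type) (r : seq I) (P : pred I) (F : I -> R) :
  (forall i, P i -> G (F i)) -> G (\sum_(i <- r | P i) F i).
Proof. by move=> h; elim/big_ind: _ => //. Qed.

Lemma gen_coef (R : comNzRingType) (G : R -> Prop) (G0 : G 0)
  (GD : forall a b, G a -> G b -> G (a + b)) (I J : finType) (P : pred I) (P' : pred J)
  (c1 : I -> R) (c2 : J -> R) (d1 : I -> nat) (d2 : J -> nat) k :
  (forall i j, G (c1 i * c2 j)) ->
  G ((\sum_(i | P i) (c1 i)%:P * 'X^(d1 i)) * (\sum_(j | P' j) (c2 j)%:P * 'X^(d2 j)))`_k.
Proof.
move=> h; rewrite coefM; apply: gen_sum => // j _.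
rewrite !coef_sum mulr_suml; apply: gen_sum => // i _.
rewrite mulr_sumr; apply: gen_sum => // i' _.
rewrite !coefCM !coefXn mulrACA -natrM mulr_natr.
elim: (_ * _)%N => [|n ih]; first by rewrite mulr0n.
by rewrite mulrS; apply: GD.
Qed.

Lemma gen_B (R : nzRingType) (G : R -> Prop) (GB : forall a b, G a -> G b -> G (a - b))
  (p q : {poly R}) k : G p`_k -> G q`_k -> G (p - q)`_k.
Proof. by rewrite coefB; apply: GB. Qed.

Lemma good_coef_Nn (V : finType) (m : nat) (ends : 'I_m -> V * V) (e f : 'I_m) k :
  good ((Nn ends e f)`_k).
Proof.
apply: (gen_B (@goodB m)); apply: (gen_coef (@good0 m) (@goodD m)) => i j;
  exact: good_xmon2.
Qed.

Lemma gen_quot (R : comNzRingType) (G : R -> Prop) (G0 : G 0)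
  (GD : forall a b, G a -> G b -> G (a + b)) (GB : forall a b, G a -> G b -> G (a - b))
  (N Q : {poly R}) :
  (forall k, G N`_k) -> N = Q * ('X - 1%:P) -> G Q.[1].
Proof.
move=> gN HQ.
have E k : Q`_k = (if k == 0%N then 0 else Q`_k.-1) - N`_k.
  by rewrite HQ polyC1 mulrBr mulr1 coefB coefMX opprB addrC subrK.
have gQ k : G Q`_k.
  elim: k => [|k ih]; first by rewrite E /=; apply: GB.
  by rewrite E /=; apply: GB.
rewrite horner_coef; apply: gen_sum => // i _; rewrite expr1n mulr1; exact: gQ.
Qed.
Lemma gen_main (R : comNzRingType) (M N Q : {poly R}) c :
  M = c%:P * N -> N = Q * ('X - 1%:P) -> M = c%:P * (1 - 'X) * (- Q).
Proof. move=> -> ->; rewrite polyC1; ring. Qed.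

Lemma gen_uniq (R : idomainType) (M P Q : {poly R}) c : c != 0 ->
  M = c%:P * (1 - 'X) * P -> M = c%:P * (1 - 'X) * (- Q) -> P.[1] = - Q.[1].
Proof.
move=> c0 HP HQ.
have nz : c%:P * (1 - 'X) != 0.
  rewrite mulf_neq0 // ?polyC_eq0 //.
  apply/eqP => h; have := congr1 (fun p : {poly R} => p`_1) h.
  by rewrite coefB coef1 coefX /= coef0 sub0r => /eqP; rewrite oppr_eq0 oner_eq0.
have -> : P = - Q by apply: (mulfI nz); rewrite -HP -HQ.
by rewrite hornerN.
Qed.

Unset Implicit Arguments.
Theorem lemma4p1 (V : finType) (m : nat) (ends : 'I_m -> V * V) (e f : 'I_m) :
  e != f ->
  ((exists P : {poly {mpoly int[m]}},
      Mnum ends e f = (xmon [set e] * xmon [set f])%:P * (1 - 'X) * P)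
   /\ (forall P : {poly {mpoly int[m]}},
         Mnum ends e f = (xmon [set e] * xmon [set f])%:P * (1 - 'X) * P ->
         deg_le2 P.[1]))
  /\ deg_le2 (Bsum ends e f).
Proof.
move=> ef.
have [Q HQ] : exists Q, Nn ends e f = Q * ('X - 1%:P).
  by apply/factor_theorem; rewrite /root Nn_at1.
have gQ : good Q.[1].
  exact: (gen_quot (@good0 m) (@goodD m) (@goodB m) (@good_coef_Nn _ _ ends e f) HQ).
have HM := gen_main (Mnum_split ends ef) HQ.
split; last exact: good_Bsum.
split; first by exists (- Q).
move=> P HP.
have c0 : xmon [set e] * xmon [set f] != 0 by rewrite mulf_neq0 ?xmon_neq0.
have := gen_uniq c0 HP HM; move=> ->.
exact: goodN.
Qed.
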